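(* Assume $\rho_\alpha^{\mathrm{dir}}<1$, and let $\theta^\star$ be the unique projected Bellman fixed point. Fix $\varepsilon>0$ with $\beta_\varepsilon:=\rho_\alpha^{\mathrm{dir}}+\varepsilon<1$, and let $p_\varepsilon$ and $C_\varepsilon$ be as described in the context. Assume additionally that \[ \lambda_\varepsilon:=\beta_\varepsilon+4\alpha\sqrt{C_\varepsilon}(1+\gamma)\phi_{\max}^2<1. \] Let \[ K:=2\alpha\sqrt{C_\varepsilon}\,\phi_{\max}\Big(R_{\max}+(1+\gamma)\|\Phi\theta^\star\|_\infty+\|R+\gamma PV_{\theta^\star}-\Phi\theta^\star\|_\infty\Big). \] Then for all $k\ge0$, with $x_k:=\theta_k-\theta^\star$, we have \[ \mathbb E[p_\varepsilon(x_k)]\le\lambda_\varepsilon^kp_\varepsilon(x_0)+\frac{K}{1-\lambda_\varepsilon}(1-\lambda_\varepsilon^k), \] \[ \mathbb E[\|\theta_k-\theta^\star\|_2]\le\sqrt{C_\varepsilon}\lambda_\varepsilon^k\|\theta_0-\theta^\star\|_2+\frac{K}{1-\lambda_\varepsilon}, \] \[ \limsup_{k\to\infty}\mathbb E[\|\theta_k-\theta^\star\|_2]\le\frac{K}{1-\lambda_\varepsilon}, \] \[ \mathbb E[\|\Phi\theta_k-\Phi\theta^\star\|_2]\le\|\Phi\|_2\Big(\sqrt{C_\varepsilon}\lambda_\varepsilon^k\|\theta_0-\theta^\star\|_2+\frac{K}{1-\lambda_\varepsilon}\Big). \]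
   Context: Consider a finite discounted MDP with state space $\mathcal S=\{1,\dots,|\mathcal S|\}$, action space $\mathcal A=\{1,\dots,|\mathcal A|\}$, transition probabilities $P(s'\mid s,a)$, real rewards $r(s,a,s')$, expected reward $R(s,a)=\sum_{s'}P(s'\mid s,a)r(s,a,s')$, and discount factor $\gamma\in(0,1)$. Let $R_{\max}:=\max_{s,a,s'}|r(s,a,s')|$. State-action vectors are ordered as $(1,1),(2,1),\dots,(|\mathcal S|,1),(1,2),\dots$. The matrix $P\in\mathbb R^{|\mathcal S||\mathcal A|\times|\mathcal S|}$ has rows $P(\cdot\mid s,a)$, and $R$ has entries $R(s,a)$. The set $\Theta$ is the set of deterministic stationary policies $\pi:\mathcal S\to\mathcal A$. For $\pi\in\Theta$, $\Pi^\pi\in\mathbb R^{|\mathcal S|\times|\mathcal S||\mathcal A|}$ has entry $1$ at row $s$, column $(s,\pi(s))$, and zeros elsewhere. The feature matrix $\Phi\in\mathbb R^{|\mathcal S||\mathcal A|\times m}$ has full column rank and rows $\phi(s,a)^\top$. Let $\phi_{\max}:=\max_{s,a}\|\phi(s,a)\|_2$, and define $V_\theta(s):=\max_a\phi(s,a)^\top\theta$. Markovian observations: fix a behavior policy $b(a\mid s)$. The trajectory evolves as $s_{k+1}\sim P(\cdot\mid s_k,a_k)$, $r_{k+1}=r(s_k,a_k,s_{k+1})$, $a_{k+1}\sim b(\cdot\mid s_{k+1})$. The state-action chain $X_k=(s_k,a_k)$ has transition kernel $P(s'\mid s,a)b(a'\mid s')$ and is assumed to have a stationary distribution $d$ with $d(s,a)>0$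 for all pairs. The chain need not start in stationarity. Let $D=\mathrm{diag}(d)$. The step size is $\alpha\in(0,1)$, and $\theta_0$ is deterministic. The update is \[ \theta_{k+1}=\theta_k+\alpha\phi(s_k,a_k)\Big(r_{k+1}+\gamma\max_u\phi(s_{k+1},u)^\top\theta_k-\phi(s_k,a_k)^\top\theta_k\Big). \] Define $g(\theta):=\Phi^\top D(R+\gamma PV_\theta-\Phi\theta)$. A projected Bellman fixed point is a $\theta^\star$ with $g(\theta^\star)=0$. For $\pi\in\Theta$, define $A_\pi:=I-\alpha\Phi^\top D\Phi+\alpha\gamma\Phi^\top DP\Pi^\pi\Phi$. Let $\rho_\alpha^{\mathrm{dir}}:=\lim_k\max_{\pi_1,\dots,\pi_k}\|A_{\pi_k}\cdots A_{\pi_1}\|^{1/k}$ be the joint spectral radius of $\{A_\pi:\pi\in\Theta\}$. If $\rho_\alpha^{\mathrm{dir}}<1$, a projected Bellman fixed point exists and is unique. Lyapunov norm: define \[ V_\varepsilon^\infty(x):=\lim_{t\to\infty}\sum_{\ell=0}^t\beta_\varepsilon^{-2\ell}\max_{\pi_1,\dots,\pi_\ell\in\Theta}\|A_{\pi_\ell}\cdots A_{\pi_1}x\|_2^2, \] where the $\ell=0$ term is $\|x\|_2^2$, and $p_\varepsilon:=\sqrt{V_\varepsilon^\infty}$ (a norm). Let $C_\varepsilon\ge1$ be a constant with $\|x\|_2^2\le V_\varepsilon^\infty(x)\le C_\varepsilon\|x\|_2^2$ for all $x$ (such a constant exists). *)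

(* Defs.v *)
From HB Require Import structures.
From mathcomp Require Import all_boot all_order all_algebra.
From mathcomp Require Import all_classical all_reals all_analysis.
Set Implicit Arguments. Unset Strict Implicit. Unset Printing Implicit Defensive.
Import Order.TTheory GRing.Theory Num.Theory.
Local Open Scope ring_scope.
Local Open Scope classical_set_scope.

Section QLearningDefs.
Variable R : realType.
Variables S A : finType.
Variable m : nat.

Definition nSA := #|{: S * A}|.
Definition nS := #|{: S}|.
Definition sa_of (i : 'I_nSA) : S * A := enum_val i.
Definition s_of (j : 'I_nS) : S := enum_val j.

Definition norm2 n (x : 'cV[R]_n) : R := Num.sqrt (\sum_i x i 0 ^+ 2).
Definition norminf n (x : 'cV[R]_n) : R := \big[Num.max/0]_i `|x i 0|.
Definition opnorm n p (M : 'M[R]_(n, p)) : R :=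
  sup [set norm2 (M *m x) | x in [set x : 'cV[R]_p | norm2 x <= 1]].

Definition dot (u v : 'cV[R]_m) : R := \sum_i u i 0 * v i 0.

Definition maxA (f : A -> R) : R :=
  match [pick a : A] with Some a0 => \big[Num.max/f a0]_a f a | None => 0 end.

Variable phi : S -> A -> 'cV[R]_m.

Definition Vth (th : 'cV[R]_m) (s : S) : R := maxA (fun a => dot (phi s a) th).

Definition Phi : 'M[R]_(nSA, m) :=
  \matrix_(i, j) phi (sa_of i).1 (sa_of i).2 j 0.

Variable P : S -> A -> S -> R.         (* P(s' | s, a) = P s a s' *)
Variable r : S -> A -> S -> R.

Definition Rexp (s : S) (a : A) : R := \sum_s' P s a s' * r s a s'.
Definition Rvec : 'cV[R]_nSA := \col_i Rexp (sa_of i).1 (sa_of i).2.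
Definition Pm : 'M[R]_(nSA, nS) := \matrix_(i, j) P (sa_of i).1 (sa_of i).2 (s_of j).
Definition Vvec (th : 'cV[R]_m) : 'cV[R]_nS := \col_j Vth th (s_of j).
Definition Pim (pi : {ffun S -> A}) : 'M[R]_(nS, nSA) :=
  \matrix_(j, i) (sa_of i == (s_of j, pi (s_of j)))%:R.

Variable d : S * A -> R.               (* stationary distribution of the behaviour chain *)
Definition Dm : 'M[R]_nSA := diag_mx (\row_i d (sa_of i)).

Variables (alpha gamma : R).

Definition Bres (th : 'cV[R]_m) : 'cV[R]_nSA := Rvec + gamma *: (Pm *m Vvec th) - Phi *m th.
Definition gfun (th : 'cV[R]_m) : 'cV[R]_m := Phi^T *m Dm *m Bres th.

Definition Amat (pi : {ffun S -> A}) : 'M[R]_m :=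
  1%:M - alpha *: (Phi^T *m Dm *m Phi)
       + (alpha * gamma) *: (Phi^T *m Dm *m Pm *m Pim pi *m Phi).

(* prodA [:: pi_1; ...; pi_k] = A_{pi_k} ... A_{pi_1} *)
Definition prodA (s : seq {ffun S -> A}) : 'M[R]_m :=
  foldr (fun pi M => M *m Amat pi) 1%:M s.

Definition maxprod (k : nat) : R :=
  \big[Num.max/0]_(ps : k.-tuple {ffun S -> A}) opnorm (prodA ps).

Definition jsr : R := limn (fun k => powR (maxprod k) (k%:R)^-1).

Definition Vinf (beta : R) (x : 'cV[R]_m) : R :=
  limn (fun t => \sum_(l < t.+1)
          (beta ^+ (2 * l))^-1 *
          \big[Num.max/0]_(ps : (val l).-tuple {ffun S -> A})
              norm2 (prodA ps *m x) ^+ 2).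

Definition peps (beta : R) (x : 'cV[R]_m) : R := Num.sqrt (Vinf beta x).

Definition Rmax : R := \big[Num.max/0]_(x : S * A * S) `|r x.1.1 x.1.2 x.2|.
Definition phimax : R := \big[Num.max/0]_(x : S * A) norm2 (phi x.1 x.2).

(* Q-learning iterates along a state-action trajectory w : nat -> S * A,
   w k = (s_k, a_k);  r_{k+1} = r(s_k, a_k, s_{k+1}). *)
Fixpoint theta (th0 : 'cV[R]_m) (w : nat -> S * A) (k : nat) : 'cV[R]_m :=
  match k with
  | 0 => th0
  | k'.+1 =>
      let th := theta th0 w k' in
      let s := (w k').1 in let a := (w k').2 in let s' := (w k'.+1).1 in
      th + alpha *: ((r s a s' + gamma * Vth th s' - dot (phi s a) th) *: phi s a)
  end.

Variable b : S -> A -> R.              (* behaviour policy b(a | s) = b s a *)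
Variable mu : S * A -> R.              (* law of X_0 = (s_0, a_0) *)

Definition wnat k (w : {ffun 'I_k.+1 -> S * A}) (j : nat) : S * A := w (inord j).

Definition pathprob k (w : {ffun 'I_k.+1 -> S * A}) : R :=
  mu (wnat w 0) *
  \prod_(j < k) (P (wnat w j).1 (wnat w j).2 (wnat w j.+1).1 *
                 b (wnat w j.+1).1 (wnat w j.+1).2).

Definition Expect (th0 : 'cV[R]_m) (k : nat) (f : 'cV[R]_m -> R) : R :=
  \sum_(w : {ffun 'I_k.+1 -> S * A}) pathprob w * f (theta th0 (wnat w) k).

End QLearningDefs.

(* Main.v *)
Require Import Defs.
From HB Require Import structures.
From mathcomp Require Import all_boot all_order all_algebra.
From mathcomp Require Import all_classical all_reals all_analysis.
From mathcomp Require Import ring lra.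
Import Order.TTheory GRing.Theory Num.Theory.
Local Open Scope ring_scope.
Local Open Scope classical_set_scope.
Set Implicit Arguments. Unset Strict Implicit. Unset Printing Implicit Defensive.
Section RealLemmas.
Context {R : realType}.

Lemma frac_le (e z : R) : 0 < e -> 0 <= z -> e / (z + 1) * z <= e.
Proof.
move=> e0 z0; rewrite mulrAC ler_pdivrMr; last by rewrite ltr_pwDr.
by rewrite ler_pM2l // lerDl.
Qed.

Lemma sq_tri_aux (x y c : R) : 0 <= x -> 0 <= y ->
  (forall t : R, 0 < t -> c <= (1 + t) * x ^+ 2 + (1 + t^-1) * y ^+ 2) ->
  c <= (x + y) ^+ 2.
Proof.
move=> x0 y0 H.
have [xz|xp] := eqVneq x 0.
  rewrite {}xz in H *; apply/ler_addgt0Pr => e e0.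
  have h := H ((y ^+ 2 + 1) / e) (divr_gt0 (ltr_pwDr ltr01 (sqr_ge0 y)) e0).
  apply: (le_trans h).
  rewrite invf_div expr0n /= mulr0 add0r add0r mulrDl mul1r lerD2l.
  exact: frac_le (sqr_ge0 _).
have [yz|yp] := eqVneq y 0.
  rewrite {}yz in H *; apply/ler_addgt0Pr => e e0.
  have h := H (e / (x ^+ 2 + 1)) (divr_gt0 e0 (ltr_pwDr ltr01 (sqr_ge0 x))).
  apply: (le_trans h).
  rewrite expr0n /= mulr0 addr0 addr0 mulrDl mul1r lerD2l.
  exact: frac_le (sqr_ge0 _).
have xg : 0 < x by rewrite lt_def xp.
have yg : 0 < y by rewrite lt_def yp.
have h := H (y / x) (divr_gt0 yg xg).
apply: (le_trans h); rewrite le_eqVlt; apply/orP; left; apply/eqP.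
by field; apply/andP; split.
Qed.

Lemma sqrt_tri (a b c : R) : 0 <= a -> 0 <= b ->
  (forall t : R, 0 < t -> c <= (1 + t) * a + (1 + t^-1) * b) ->
  Num.sqrt c <= Num.sqrt a + Num.sqrt b.
Proof.
move=> a0 b0 H.
have h : c <= (Num.sqrt a + Num.sqrt b) ^+ 2.
  apply: sq_tri_aux; rewrite ?sqrtr_ge0 // !sqr_sqrtr //.
rewrite -(ger0_norm (addr_ge0 (sqrtr_ge0 a) (sqrtr_ge0 b))) -sqrtr_sqr.
by rewrite ler_sqrt // sqr_ge0.
Qed.

Lemma sq_split (a b t : R) : 0 < t ->
  (a + b) ^+ 2 <= (1 + t) * a ^+ 2 + (1 + t^-1) * b ^+ 2.
Proof.
move=> t0.
have e : (1 + t) * a ^+ 2 + (1 + t^-1) * b ^+ 2 - (a + b) ^+ 2 = (t * a - b) ^+ 2 / t.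
  by field; rewrite gt_eqF.
by rewrite -subr_ge0 e divr_ge0 ?sqr_ge0 // ltW.
Qed.

Lemma cs_aux (X x y : R) : 0 <= x -> 0 <= y ->
  (forall t : R, 0 < t -> 2 * X <= t * x ^+ 2 + t^-1 * y ^+ 2) -> X <= x * y.
Proof.
move=> x0 y0 H.
have [xz|xp] := eqVneq x 0.
  rewrite {}xz in H *; rewrite mul0r; apply/ler_addgt0Pr => e e0; rewrite add0r.
  have h := H ((y ^+ 2 + 1) / e) (divr_gt0 (ltr_pwDr ltr01 (sqr_ge0 y)) e0).
  rewrite expr0n /= mulr0 add0r invf_div in h.
  have h2 := frac_le e0 (sqr_ge0 y).
  lra.
have [yz|yp] := eqVneq y 0.
  rewrite {}yz in H *; rewrite mulr0; apply/ler_addgt0Pr => e e0; rewrite add0r.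
  have h := H (e / (x ^+ 2 + 1)) (divr_gt0 e0 (ltr_pwDr ltr01 (sqr_ge0 x))).
  rewrite expr0n /= mulr0 addr0 in h.
  have h2 := frac_le e0 (sqr_ge0 x).
  lra.
have xg : 0 < x by rewrite lt_def xp.
have yg : 0 < y by rewrite lt_def yp.
have h := H (y / x) (divr_gt0 yg xg).
have e : y / x * x ^+ 2 + (y / x)^-1 * y ^+ 2 = 2 * (x * y) by field; apply/andP; split.
rewrite e in h; lra.
Qed.


End RealLemmas.

Section VecLemmas.
Context {R : realType}.

Lemma norm2_ge0 n (x : 'cV[R]_n) : 0 <= norm2 x.
Proof. exact: sqrtr_ge0. Qed.

Lemma sumsq_ge0 n (x : 'cV[R]_n) : 0 <= \sum_i x i 0 ^+ 2.
Proof. by apply: sumr_ge0 => i _; apply: sqr_ge0. Qed.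

Lemma norm2_sq n (x : 'cV[R]_n) : norm2 x ^+ 2 = \sum_i x i 0 ^+ 2.
Proof. by rewrite /norm2 sqr_sqrtr // sumsq_ge0. Qed.

Lemma norm2_tri n (x y : 'cV[R]_n) : norm2 (x + y) <= norm2 x + norm2 y.
Proof.
apply: sqrt_tri; rewrite ?sumsq_ge0 // => t t0.
rewrite !mulr_sumr -big_split /=; apply: ler_sum => i _.
by rewrite mxE; apply: sq_split.
Qed.

Lemma norm2_scale n (c : R) (x : 'cV[R]_n) : norm2 (c *: x) = `|c| * norm2 x.
Proof.
rewrite /norm2 -sqrtr_sqr -sqrtrM ?sqr_ge0 // mulr_sumr; congr Num.sqrt.
by apply: eq_bigr => i _; rewrite mxE exprMn.
Qed.

Lemma norm2_opp n (x : 'cV[R]_n) : norm2 (- x) = norm2 x.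
Proof. by rewrite -scaleN1r norm2_scale normrN normr1 mul1r. Qed.

Lemma norm2_0 n : norm2 (0 : 'cV[R]_n) = 0.
Proof.
rewrite /norm2 big1 ?sqrtr0 // => i _; by rewrite mxE expr0n.
Qed.

Lemma norm2_sum n (I : finType) (F : I -> 'cV[R]_n) :
  norm2 (\sum_i F i) <= \sum_i norm2 (F i).
Proof.
elim/big_rec2: _ => [|i y1 y2 _ IH]; first by rewrite norm2_0.
by apply: (le_trans (norm2_tri _ _)); rewrite lerD2l.
Qed.

Lemma comp_le_norm2 n (x : 'cV[R]_n) i : `|x i 0| <= norm2 x.
Proof.
rewrite -sqrtr_sqr ler_sqrt ?sumsq_ge0 // (bigD1 i) //= lerDl.
by apply: sumr_ge0 => j _; apply: sqr_ge0.
Qed.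

Lemma dot_cs m (u v : 'cV[R]_m) : `|dot u v| <= norm2 u * norm2 v.
Proof.
apply: cs_aux; rewrite ?norm2_ge0 // => t t0.
rewrite !norm2_sq !mulr_sumr -big_split /= /dot.
apply: (le_trans (ler_wpM2l _ (ler_norm_sum _ _ _))) => //.
rewrite mulr_sumr; apply: ler_sum => i _.
have e : t * u i 0 ^+ 2 + t^-1 * v i 0 ^+ 2 - 2 * `|u i 0 * v i 0|
   = (t * `|u i 0| - `|v i 0|) ^+ 2 / t.
  rewrite -(real_normK (num_real (u i 0))) -(real_normK (num_real (v i 0))) normrM.
  by field; rewrite gt_eqF.
by rewrite -subr_ge0 e divr_ge0 ?sqr_ge0 // ltW.
Qed.

Lemma mulmx_col n p (M : 'M[R]_(n, p)) (x : 'cV[R]_p) :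
  M *m x = \sum_j x j 0 *: col j M.
Proof.
apply/matrixP => i k; rewrite !mxE summxE; apply: eq_bigr => j _.
by rewrite !mxE (ord1 k) mulrC.
Qed.

Lemma norm2_mulmx n p (M : 'M[R]_(n, p)) (x : 'cV[R]_p) :
  norm2 (M *m x) <= \sum_j `|x j 0| * norm2 (col j M).
Proof.
rewrite mulmx_col; apply: (le_trans (norm2_sum _)).
by apply: ler_sum => j _; rewrite norm2_scale.
Qed.

End VecLemmas.

Section VinfLemmas.
Context {R : realType} {S A : finType} {m : nat}.
Variables (phi : S -> A -> 'cV[R]_m) (P : S -> A -> S -> R) (d : S * A -> R).
Variables (alpha gamma beta C : R).

Let pA := prodA phi P d alpha gamma.
Definition Tm (l : nat) (x : 'cV[R]_m) :=
  \big[Num.max/0]_(ps : l.-tuple {ffun S -> A}) norm2 (pA ps *m x) ^+ 2.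
Definition Gt (x : 'cV[R]_m) (l : nat) := (beta ^+ (2 * l))^-1 * Tm l x.
Definition ssum (x : 'cV[R]_m) (t : nat) := \sum_(l < t.+1) Gt x l.

Lemma VinfE x : Vinf phi P d alpha gamma beta x = limn (ssum x).
Proof. reflexivity. Qed.

Lemma Tm_ge0 l x : 0 <= Tm l x.
Proof. exact: bigmax_ge_id. Qed.

Lemma w_ge0 l : 0 <= (beta ^+ (2 * l))^-1.
Proof. by rewrite invr_ge0 mulnC exprM sqr_ge0. Qed.

Lemma Gt_ge0 x l : 0 <= Gt x l.
Proof. by rewrite /Gt mulr_ge0 ?w_ge0 ?Tm_ge0. Qed.

Lemma ssum_nd x : nondecreasing_seq (ssum x).
Proof.
apply/nondecreasing_seqP => t; rewrite /ssum [in X in _ <= X]big_ord_recr /=.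
by rewrite lerDl Gt_ge0.
Qed.

Lemma Tm_x0 l : Tm l 0 = 0.
Proof.
apply/eqP; rewrite eq_le Tm_ge0 andbT; apply: bigmax_le => // ps _.
by rewrite mulmx0 norm2_0 expr0n.
Qed.

Hypothesis Hv : forall x : 'cV[R]_m,
  norm2 x ^+ 2 <= Vinf phi P d alpha gamma beta x <= C * norm2 x ^+ 2.

Lemma norm2_eq0 n (x : 'cV[R]_n) : norm2 x = 0 -> x = 0.
Proof.
move=> h; apply/matrixP => i j; rewrite (ord1 j) mxE.
have := comp_le_norm2 x i; rewrite h => h2.
by apply/eqP; rewrite -normr_le0.
Qed.

Lemma ssum_cvg x : cvgn (ssum x).
Proof.
case: (pselect (cvgn (ssum x))) => // ncv.
have h0 : Vinf phi P d alpha gamma beta x = 0 by rewrite VinfE (dvgP ncv).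
have := Hv x; rewrite h0 => /andP[h1 _].
have nx : norm2 x = 0.
  apply/eqP; rewrite -sqrf_eq0 eq_le h1 sqr_ge0 //.
have x0 := norm2_eq0 nx; subst x.
exfalso; apply: ncv.
have -> : ssum 0 = fun _ => 0.
  apply: funext => t; rewrite /ssum big1 // => l _; by rewrite /Gt Tm_x0 mulr0.
exact: is_cvg_cst.
Qed.

Lemma ssum_le x t : ssum x t <= Vinf phi P d alpha gamma beta x.
Proof. rewrite VinfE; exact: nondecreasing_cvgn_le (ssum_nd x) (@ssum_cvg x) t. Qed.

Lemma Vinf_le x c : (forall t, ssum x t <= c) -> Vinf phi P d alpha gamma beta x <= c.
Proof.
move=> h; rewrite VinfE; apply: limr_le; first exact: ssum_cvg.
exact: nearW.
Qed.

Lemma Vinf_ge0 x : 0 <= Vinf phi P d alpha gamma beta x.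
Proof. apply: le_trans (ssum_le x 0); rewrite /ssum; apply: sumr_ge0 => l _; exact: Gt_ge0. Qed.

Lemma Tm_tri l x y t : 0 < t -> Tm l (x + y) <= (1 + t) * Tm l x + (1 + t^-1) * Tm l y.
Proof.
move=> t0; apply: bigmax_le.
  by rewrite addr_ge0 // mulr_ge0 ?Tm_ge0 // addr_ge0 // ?invr_ge0 ltW.
move=> ps _; rewrite mulmxDr.
apply: (@le_trans _ _ ((norm2 (pA ps *m x) + norm2 (pA ps *m y)) ^+ 2)).
  by rewrite ler_pXn2r ?nnegrE ?addr_ge0 ?norm2_ge0 // norm2_tri.
apply: le_trans (sq_split _ _ t0) _.
apply: lerD; apply: ler_wpM2l.
- by apply: addr_ge0 => //; apply: ltW.
- exact: le_bigmax.
- by apply: addr_ge0 => //; rewrite invr_ge0 ltW.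
- exact: le_bigmax.
Qed.

Lemma Vinf_tri x y t : 0 < t ->
  Vinf phi P d alpha gamma beta (x + y) <=
  (1 + t) * Vinf phi P d alpha gamma beta x + (1 + t^-1) * Vinf phi P d alpha gamma beta y.
Proof.
move=> t0; apply: Vinf_le => n.
have h : ssum (x + y) n <= (1 + t) * ssum x n + (1 + t^-1) * ssum y n.
  rewrite /ssum !mulr_sumr -big_split /=; apply: ler_sum => l _.
  rewrite /Gt mulrCA [X in _ <= _ + X]mulrCA -mulrDr.
  by apply: ler_wpM2l; [exact: w_ge0| exact: Tm_tri].
apply: (le_trans h); apply: lerD; apply: ler_wpM2l.
- by apply: addr_ge0 => //; apply: ltW.
- exact: ssum_le.
- by apply: addr_ge0 => //; rewrite invr_ge0 ltW.
- exact: ssum_le.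
Qed.

Lemma peps_tri x y :
  peps phi P d alpha gamma beta (x + y) <=
  peps phi P d alpha gamma beta x + peps phi P d alpha gamma beta y.
Proof. by apply: sqrt_tri; rewrite ?Vinf_ge0 // => t t0; apply: Vinf_tri. Qed.

Lemma peps_bounds x : 0 <= C ->
  norm2 x <= peps phi P d alpha gamma beta x <= Num.sqrt C * norm2 x.
Proof.
move=> C0; have /andP[h1 h2] := Hv x; apply/andP; split.
  rewrite -(ger0_norm (norm2_ge0 x)) -sqrtr_sqr /peps ler_sqrt //.
  exact: Vinf_ge0.
rewrite /peps -(ger0_norm (norm2_ge0 x)) -sqrtr_sqr -sqrtrM //.
by rewrite ler_sqrt // mulr_ge0 // sqr_ge0.
Qed.

Lemma Tm_A (pi : {ffun S -> A}) l x :
  Tm l (Amat phi P d alpha gamma pi *m x) <= Tm l.+1 x.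
Proof.
apply: bigmax_le; first exact: Tm_ge0.
move=> ps _; rewrite mulmxA.
have -> : pA ps *m Amat phi P d alpha gamma pi = pA (cons_tuple pi ps) by [].
rewrite /Tm. apply: (bigmax_sup (cons_tuple pi ps)) => //.
Qed.

Lemma Vinf_A (pi : {ffun S -> A}) x : beta != 0 ->
  Vinf phi P d alpha gamma beta (Amat phi P d alpha gamma pi *m x) <=
  beta ^+ 2 * Vinf phi P d alpha gamma beta x.
Proof.
move=> b0; apply: Vinf_le => t.
apply: le_trans (ler_wpM2l (sqr_ge0 beta) (ssum_le x t.+1)).
rewrite /ssum [X in _ <= _ * X]big_ord_recl /= mulrDr.
rewrite -[X in X <= _]add0r; apply: lerD; first by rewrite mulr_ge0 ?sqr_ge0 ?Gt_ge0.
rewrite mulr_sumr; apply: ler_sum => l _.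
rewrite /Gt; change (bump 0 l) with l.+1; rewrite mulrA.
have -> : beta ^+ 2 * (beta ^+ (2 * l.+1))^-1 = (beta ^+ (2 * l))^-1.
  rewrite mulnS exprD invfM mulrA divff ?mul1r //.
  by rewrite expf_neq0.
by apply: ler_wpM2l; [exact: w_ge0| exact: Tm_A].
Qed.

Lemma peps_A (pi : {ffun S -> A}) x : 0 < beta ->
  peps phi P d alpha gamma beta (Amat phi P d alpha gamma pi *m x) <=
  beta * peps phi P d alpha gamma beta x.
Proof.
move=> b0; rewrite /peps.
have -> : beta * Num.sqrt (Vinf phi P d alpha gamma beta x) =
   Num.sqrt (beta ^+ 2 * Vinf phi P d alpha gamma beta x).
  by rewrite sqrtrM ?sqr_ge0 // sqrtr_sqr ger0_norm // ltW.
by rewrite ler_sqrt ?Vinf_A ?gt_eqF // mulr_ge0 ?sqr_ge0 ?Vinf_ge0.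
Qed.

End VinfLemmas.

Section Enum.
Context {R : realType} {S A : finType}.

Lemma sum_sa (F : S * A -> R) : \sum_(i < nSA S A) F (sa_of i) = \sum_x F x.
Proof.
rewrite (reindex (@enum_rank (S * A)%type)) /=.
  by apply: eq_bigr => x _; rewrite /sa_of enum_rankK.
by apply: onW_bij; exists enum_val; [exact: enum_rankK | exact: enum_valK].
Qed.

Lemma sum_s (F : S -> R) : \sum_(j < nS S) F (s_of j) = \sum_x F x.
Proof.
rewrite (reindex (@enum_rank S)) /=.
  by apply: eq_bigr => x _; rewrite /s_of enum_rankK.
by apply: onW_bij; exists enum_val; [exact: enum_rankK | exact: enum_valK].
Qed.

End Enum.

Section Step.
Context {R : realType} {S A : finType} {m : nat}.
Variables (phi : S -> A -> 'cV[R]_m) (P : S -> A -> S -> R) (r : S -> A -> S -> R).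
Variables (d : S * A -> R) (alpha gamma : R).

Local Notation Phm := (Phi phi).
Local Notation phs i := (phi (sa_of i).1 (sa_of i).2).

Lemma PhiE (x : 'cV[R]_m) i : (Phm *m x) i 0 = dot (phs i) x.
Proof. by rewrite !mxE; apply: eq_bigr => j _; rewrite !mxE. Qed.

Lemma PhiTD (y : 'cV[R]_(nSA S A)) :
  Phm^T *m Dm d *m y = \sum_i (d (sa_of i) * y i 0) *: phs i.
Proof.
apply/matrixP => j k; rewrite (ord1 k) !mxE summxE; apply: eq_bigr => i _.
by rewrite /Dm mul_mx_diag !mxE -mulrA mulrC.
Qed.

Lemma phimax_ge0 : 0 <= phimax phi.
Proof. exact: bigmax_ge_id. Qed.

Lemma phi_le s a : norm2 (phi s a) <= phimax phi.
Proof. by apply: (bigmax_sup (s, a)). Qed.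

Lemma dot_le s a (x : 'cV[R]_m) : `|dot (phi s a) x| <= phimax phi * norm2 x.
Proof.
apply: le_trans (dot_cs _ _) _.
by apply: ler_wpM2r; [exact: norm2_ge0| exact: phi_le].
Qed.

Hypothesis d_ge0 : forall x, 0 <= d x.
Hypothesis d_sum : \sum_x d x = 1.

Lemma PhiTD_le (y : 'cV[R]_(nSA S A)) c : 0 <= c -> (forall i, `|y i 0| <= c) ->
  norm2 (Phm^T *m Dm d *m y) <= phimax phi * c.
Proof.
move=> c0 hy; rewrite PhiTD; apply: le_trans (norm2_sum _) _.
apply: (@le_trans _ _ (\sum_i d (sa_of i) * (phimax phi * c))).
  apply: ler_sum => i _; rewrite norm2_scale normrM (ger0_norm (d_ge0 _)) -mulrA.
  apply: ler_wpM2l => //; rewrite mulrC; apply: ler_pM => //.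
  - exact: norm2_ge0.
  - exact: phi_le.
by rewrite -mulr_suml (sum_sa d) d_sum mul1r.
Qed.

Lemma stoch_le n p (M : 'M[R]_(n, p)) (z : 'cV[R]_p) c :
  (forall i j, 0 <= M i j) -> (forall i, \sum_j M i j = 1) -> (forall j, `|z j 0| <= c) ->
  forall i, `|(M *m z) i 0| <= c.
Proof.
move=> M0 M1 hz i; rewrite mxE; apply: le_trans (ler_norm_sum _ _ _) _.
apply: (@le_trans _ _ (\sum_j M i j * c)).
  apply: ler_sum => j _; rewrite normrM (ger0_norm (M0 _ _)).
  exact: ler_wpM2l.
by rewrite -mulr_suml M1 mul1r.
Qed.

Hypothesis P_ge0 : forall s a s', 0 <= P s a s'.
Hypothesis P_sum : forall s a, \sum_s' P s a s' = 1.

Lemma Pm_ge0 i j : 0 <= Pm P i j.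
Proof. by rewrite mxE. Qed.

Lemma Pm_sum i : \sum_j Pm P i j = 1.
Proof.
rewrite -(P_sum (sa_of i).1 (sa_of i).2) -(sum_s (P (sa_of i).1 (sa_of i).2)).
by apply: eq_bigr => j _; rewrite mxE.
Qed.

Lemma Pim_ge0 (pi : {ffun S -> A}) i j : 0 <= Pim R pi i j.
Proof. by rewrite mxE ler0n. Qed.

Lemma Pim_sum (pi : {ffun S -> A}) j : \sum_i Pim R pi j i = 1.
Proof.
under eq_bigr do rewrite mxE.
rewrite (sum_sa (fun x => (x == (s_of j, pi (s_of j)))%:R)).
rewrite (bigD1 (s_of j, pi (s_of j))) //= eqxx big1 ?addr0 // => x /negbTE ->.
by [].
Qed.


Lemma AmatE (pi : {ffun S -> A}) (x : 'cV[R]_m) :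
  Amat phi P d alpha gamma pi *m x =
  x - alpha *: (Phm^T *m Dm d *m (Phm *m x))
    + (alpha * gamma) *: (Phm^T *m Dm d *m (Pm P *m (Pim R pi *m (Phm *m x)))).
Proof.
rewrite /Amat mulmxDl mulmxBl mul1mx -!scalemxAl !mulmxA.
by [].
Qed.

Lemma norminf_ge0 n (v : 'cV[R]_n) : 0 <= norminf v.
Proof. exact: bigmax_ge_id. Qed.

Lemma norminf_le n (v : 'cV[R]_n) i : `|v i 0| <= norminf v.
Proof. by apply: (bigmax_sup i). Qed.

Lemma Rmax_ge0 : 0 <= Rmax r.
Proof. exact: bigmax_ge_id. Qed.

Lemma r_le s a s' : `|r s a s'| <= Rmax r.
Proof. by apply: (bigmax_sup (s, a, s')). Qed.

Lemma dotD (u v w : 'cV[R]_m) : dot u (v + w) = dot u v + dot u w.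
Proof. by rewrite /dot -big_split; apply: eq_bigr => i _; rewrite mxE mulrDr. Qed.

Lemma dot_star s a (ths : 'cV[R]_m) : `|dot (phi s a) ths| <= norminf (Phm *m ths).
Proof.
have := norminf_le (Phm *m ths) (enum_rank (s, a)).
by rewrite PhiE /sa_of enum_rankK.
Qed.

Lemma maxA_le (f : A -> R) c : 0 <= c -> (forall a, `|f a| <= c) -> `|Defs.maxA f| <= c.
Proof.
move=> c0 hf; rewrite /Defs.maxA; case: pickP => [a0 _|_]; last by rewrite normr0.
rewrite ler_norml; apply/andP; split.
  apply: le_trans (bigmax_ge_id _ _ _ _).
  by have := hf a0; rewrite ler_norml => /andP[].
apply: bigmax_le; first by have := hf a0; rewrite ler_norml => /andP[].
by move=> a _; have := hf a; rewrite ler_norml => /andP[].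
Qed.

Lemma Vth_le (ths x : 'cV[R]_m) s :
  `|Vth phi (ths + x) s| <= norminf (Phm *m ths) + phimax phi * norm2 x.
Proof.
apply: maxA_le; first by rewrite addr_ge0 ?norminf_ge0 // mulr_ge0 ?phimax_ge0 ?norm2_ge0.
move=> a; rewrite dotD; apply: le_trans (ler_normD _ _) _.
by apply: lerD; [exact: dot_star | exact: dot_le].
Qed.


Lemma dot_th_le (ths x : 'cV[R]_m) s a :
  `|dot (phi s a) (ths + x)| <= norminf (Phm *m ths) + phimax phi * norm2 x.
Proof.
rewrite dotD; apply: le_trans (ler_normD _ _) _.
by apply: lerD; [exact: dot_star | exact: dot_le].
Qed.

Lemma step_noise (pi : {ffun S -> A}) (ths th : 'cV[R]_m) s a s' :
  0 < alpha -> 0 <= gamma ->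
  norm2 ((th + alpha *: ((r s a s' + gamma * Vth phi th s' - dot (phi s a) th) *: phi s a))
          - ths - Amat phi P d alpha gamma pi *m (th - ths))
   <= alpha * phimax phi * (Rmax r + (1 + gamma) * norminf (Phm *m ths))
      + 2 * alpha * (1 + gamma) * phimax phi ^+ 2 * norm2 (th - ths).
Proof.
move=> a0 g0.
set dl := r s a s' + gamma * Vth phi th s' - dot (phi s a) th.
set x := th - ths.
have ex : th = ths + x by rewrite /x addrC subrK.
clearbody x.
set y := Phm *m x - gamma *: (Pm P *m (Pim R pi *m (Phm *m x))).
have E : th + alpha *: (dl *: phi s a) - ths - Amat phi P d alpha gamma pi *m x
         = alpha *: (dl *: phi s a + Phm^T *m Dm d *m y).
  rewrite AmatE /y (mulmxBr (Phm^T *m Dm d)) -scalemxAr.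
  set u := Phm^T *m Dm d *m (Phm *m x).
  set v := Phm^T *m Dm d *m (Pm P *m (Pim R pi *m (Phm *m x))).
  rewrite {1}ex; apply/matrixP => i j; rewrite !mxE; ring.
rewrite E norm2_scale (ger0_norm (ltW a0)).
set N := norminf (Phm *m ths).
have hd : `|dl| <= Rmax r + (1 + gamma) * N + (1 + gamma) * phimax phi * norm2 x.
  rewrite /dl; apply: le_trans (ler_normB _ _) _.
  apply: le_trans (lerD (ler_normD _ _) (lexx _)) _.
  have h1 := r_le s a s'.
  have h2 := Vth_le ths x s'; rewrite -ex in h2.
  have h3 := dot_th_le ths x s a; rewrite -ex in h3.
  rewrite normrM (ger0_norm g0).
  have h4 : gamma * `|Vth phi th s'| <= gamma * (N + phimax phi * norm2 x) by exact: ler_wpM2l.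
  rewrite -/N in h3; lra.
have hy : forall i, `|y i 0| <= (1 + gamma) * (phimax phi * norm2 x).
  move=> i.
  have -> : y i 0 = (Phm *m x) i 0 - gamma * (Pm P *m (Pim R pi *m (Phm *m x))) i 0.
    by rewrite /y !mxE.
  apply: le_trans (ler_normB _ _) _.
  rewrite normrM (ger0_norm g0) mulrDl mul1r; apply: lerD.
    by rewrite PhiE; exact: dot_le.
  apply: ler_wpM2l => //.
  apply: stoch_le; first exact: Pm_ge0.
    exact: Pm_sum.
  apply: stoch_le; first exact: Pim_ge0.
    exact: Pim_sum.
  by move=> j; rewrite PhiE; exact: dot_le.
have hy2 := PhiTD_le (mulr_ge0 (addr_ge0 ler01 g0) (mulr_ge0 phimax_ge0 (norm2_ge0 x))) hy.
have H : norm2 (dl *: phi s a + Phm^T *m Dm d *m y) <=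
   (Rmax r + (1 + gamma) * N + (1 + gamma) * phimax phi * norm2 x) * phimax phi
   + phimax phi * ((1 + gamma) * (phimax phi * norm2 x)).
  apply: le_trans (norm2_tri _ _) _; apply: lerD => //.
  rewrite norm2_scale; apply: ler_pM => //; [exact: norm2_ge0 | exact: phi_le].
apply: le_trans (ler_wpM2l (ltW a0) H) _.
by rewrite le_eqVlt; apply/orP; left; apply/eqP; ring.
Qed.

End Step.

Section Paths.
Context {R : realType} {T : finType}.

Definition ext k (w : {ffun 'I_k.+1 -> T}) (t : T) : {ffun 'I_k.+2 -> T} :=
  [ffun i : 'I_k.+2 => if (i < k.+1)%N then w (inord i) else t].

Lemma sum_ffunS k (F : {ffun 'I_k.+2 -> T} -> R) :
  \sum_w F w = \sum_(w : {ffun 'I_k.+1 -> T}) \sum_(t : T) F (ext w t).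
Proof.
rewrite pair_big /= (reindex (fun p : {ffun 'I_k.+1 -> T} * T => ext p.1 p.2)) //.
apply: onW_bij.
exists (fun w : {ffun 'I_k.+2 -> T} =>
          ([ffun i : 'I_k.+1 => w (widen_ord (leqnSn _) i)], w ord_max)).
  case=> w t /=; congr pair.
    apply/ffunP => i; rewrite !ffunE /= ltn_ord.
    by congr (w _); apply: val_inj; rewrite /= inordK.
  by rewrite ffunE /= ltnn.
move=> w; apply/ffunP => i; rewrite !ffunE.
case: ifP => hi.
  by congr (w _); apply: val_inj; rewrite /= inordK.
rewrite /=; congr (w _); apply: val_inj => /=.
by apply/eqP; rewrite eqn_leq leqNgt hi -ltnS ltn_ord.
Qed.

Lemma sum_ffun1 (F : {ffun 'I_1 -> T} -> R) :
  \sum_w F w = \sum_(t : T) F [ffun _ => t].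
Proof.
rewrite (reindex (fun t : T => [ffun _ : 'I_1 => t])) //.
apply: onW_bij; exists (fun w : {ffun 'I_1 -> T} => w ord0).
  by move=> t; rewrite ffunE.
by move=> w; apply/ffunP => i; rewrite ffunE (ord1 i).
Qed.

End Paths.

Section PathProb.
Context {R : realType} {S A : finType}.
Variables (P : S -> A -> S -> R) (b : S -> A -> R) (mu : S * A -> R).
Hypothesis P_ge0 : forall s a s', 0 <= P s a s'.
Hypothesis P_sum : forall s a, \sum_s' P s a s' = 1.
Hypothesis b_ge0 : forall s a, 0 <= b s a.
Hypothesis b_sum : forall s, \sum_a b s a = 1.
Hypothesis mu_ge0 : forall x, 0 <= mu x.
Hypothesis mu_sum : \sum_x mu x = 1.

Lemma pathprob_ge0 k (w : {ffun 'I_k.+1 -> S * A}) : 0 <= pathprob P b mu w.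
Proof.
rewrite /pathprob mulr_ge0 //; apply: prodr_ge0 => j _.
by rewrite mulr_ge0.
Qed.

Lemma wnat_ext k (w : {ffun 'I_k.+1 -> S * A}) t j : (j < k.+1)%N ->
  wnat (ext w t) j = wnat w j.
Proof.
move=> hj; rewrite /wnat ffunE inordK; last by apply: ltnW.
by rewrite hj.
Qed.

Lemma wnat_ext_last k (w : {ffun 'I_k.+1 -> S * A}) t : wnat (ext w t) k.+1 = t.
Proof. by rewrite /wnat ffunE inordK // ltnn. Qed.

Lemma pathprob_ext k (w : {ffun 'I_k.+1 -> S * A}) t :
  pathprob P b mu (ext w t) =
  pathprob P b mu w * (P (wnat w k).1 (wnat w k).2 t.1 * b t.1 t.2).
Proof.
rewrite /pathprob big_ord_recr /= mulrA wnat_ext_last wnat_ext //.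
rewrite wnat_ext //; congr (_ * _ * _).
apply: eq_bigr => j _.
rewrite !wnat_ext //; last by apply: leqW.
by rewrite ltnS.
Qed.

Lemma sum_trans s a : \sum_(t : S * A) P s a t.1 * b t.1 t.2 = 1.
Proof.
rewrite -(pair_big predT predT (fun s' a' => P s a s' * b s' a')) /=.
rewrite -(P_sum s a); apply: eq_bigr => s' _.
by rewrite -mulr_sumr b_sum mulr1.
Qed.

Lemma pathprob_sum k : \sum_(w : {ffun 'I_k.+1 -> S * A}) pathprob P b mu w = 1.
Proof.
elim: k => [|k IH].
  rewrite sum_ffun1 -mu_sum; apply: eq_bigr => t _.
  by rewrite /pathprob big_ord0 mulr1 /wnat ffunE.
rewrite sum_ffunS -IH; apply: eq_bigr => w _.
under eq_bigr do rewrite pathprob_ext.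
by rewrite -mulr_sumr sum_trans mulr1.
Qed.

Lemma Expect_le m (phi : S -> A -> 'cV[R]_m) r alpha gamma th0 k (f : 'cV[R]_m -> R) B :
  (forall w : nat -> S * A, f (theta phi r alpha gamma th0 w k) <= B) ->
  Expect phi P r alpha gamma b mu th0 k f <= B.
Proof.
move=> h; rewrite /Expect.
apply: (@le_trans _ _ (\sum_(w : {ffun 'I_k.+1 -> S * A}) pathprob P b mu w * B)).
  by apply: ler_sum => w _; apply: ler_wpM2l; [exact: pathprob_ge0 | exact: h].
by rewrite -mulr_suml pathprob_sum mul1r.
Qed.

End PathProb.

Section Final.
Context {R : realType}.

Lemma jsr_ge0 (S A : finType) m (phi : S -> A -> 'cV[R]_m) P d alpha gamma :
  0 <= jsr phi P d alpha gamma.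
Proof.
rewrite /jsr.
case: (pselect (cvgn (fun k => powR (maxprod phi P d alpha gamma k) (k%:R)^-1))) => h.
  by apply: limr_ge h _; apply: nearW => k; exact: powR_ge0.
by rewrite (dvgP h).
Qed.

Lemma opnorm_has_sup n p (M : 'M[R]_(n, p)) :
  has_sup [set norm2 (M *m x) | x in [set x : 'cV[R]_p | norm2 x <= 1]].
Proof.
split.
  exists 0; exists 0; first by rewrite /= norm2_0 ler01.
  by rewrite mulmx0 norm2_0.
exists (\sum_j norm2 (col j M)) => _ [x hx <-].
apply: le_trans (norm2_mulmx _ _) _; apply: ler_sum => j _.
apply: ler_piMl; first exact: norm2_ge0.
by apply: le_trans (comp_le_norm2 x j) hx.
Qed.

Lemma opnorm_ge0 n p (M : 'M[R]_(n, p)) : 0 <= opnorm M.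
Proof.
apply: (sup_upper_bound (opnorm_has_sup M)); exists 0; first by rewrite /= norm2_0 ler01.
by rewrite mulmx0 norm2_0.
Qed.

Lemma opnorm_le n p (M : 'M[R]_(n, p)) x : norm2 (M *m x) <= opnorm M * norm2 x.
Proof.
have [nx0|nx0] := eqVneq (norm2 x) 0.
  by rewrite nx0 mulr0 (norm2_eq0 nx0) mulmx0 norm2_0.
have nxp : 0 < norm2 x by rewrite lt_def nx0 norm2_ge0.
have h : norm2 (M *m ((norm2 x)^-1 *: x)) <= opnorm M.
  apply: (sup_upper_bound (opnorm_has_sup M)); exists ((norm2 x)^-1 *: x) => //=.
  by rewrite norm2_scale ger0_norm ?invr_ge0 ?norm2_ge0 // mulVf.
rewrite -scalemxAr norm2_scale ger0_norm ?invr_ge0 ?norm2_ge0 // in h.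
rewrite mulrC -ler_pdivrMl //; by rewrite mulrC.
Qed.

End Final.

Module EsupM.
Import numFieldNormedType.Exports.
Lemma esup_bound (R : realType) (u : nat -> R) (c lam L : R) : 0 <= lam < 1 ->
  (forall k, u k <= c * lam ^+ k + L) ->
  (limn_esup (fun k => (u k)%:E) <= L%:E)%E.
Proof.
move=> /andP[lam0 lam1] hu.
pose v k := (c * lam ^+ k + L)%:E.
have cvr : (fun k => c * lam ^+ k + L) @ \oo --> L.
  have h0 : (fun k => lam ^+ k) @ \oo --> 0.
    by apply: cvg_expr; rewrite ger0_norm.
  have h1 : (fun k => c * lam ^+ k) @ \oo --> c * 0.
    by apply: cvgMr; exact: h0.
  rewrite mulr0 in h1.
  have h2 : (fun k => c * lam ^+ k + L) @ \oo --> 0 + L.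
    by apply: cvgD; [exact: h1 | exact: cvg_cst].
  by rewrite add0r in h2.
have cv : v @ \oo --> L%:E.
  apply: cvg_EFin; first by apply: nearW.
  exact: cvr.
rewrite limn_esup_lim.
apply: (@le_trans _ _ (limn (esups v))).
  apply: lee_lim; [exact: is_cvg_esups | exact: is_cvg_esups |].
  apply: nearW => n; apply: ge_ereal_sup => _ [k /= nk <-].
  apply: (@le_trans _ _ (v k)); first by rewrite lee_fin.
  by apply: ereal_sup_ubound; exists k.
rewrite -limn_esup_lim is_cvg_limn_esupE; last by apply/cvg_ex; exists L%:E.
by rewrite (cvg_lim _ cv).
Qed.
End EsupM.
Import EsupM.

Lemma thetaS (R : realType) (S A : finType) m (phi : S -> A -> 'cV[R]_m) r alpha gamma th0 w k :
  theta phi r alpha gamma th0 w k.+1 =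
  theta phi r alpha gamma th0 w k + alpha *:
   ((r (w k).1 (w k).2 (w k.+1).1 + gamma * Vth phi (theta phi r alpha gamma th0 w k) (w k.+1).1
     - dot (phi (w k).1 (w k).2) (theta phi r alpha gamma th0 w k)) *: phi (w k).1 (w k).2).
Proof. by []. Qed.

Local Close Scope classical_set_scope.
Local Open Scope ring_scope.

Theorem theorem4 (R : realType) (S A : finType) (m : nat)
  (P : S -> A -> S -> R) (r : S -> A -> S -> R) (gamma : R)
  (phi : S -> A -> 'cV[R]_m) (b : S -> A -> R) (mu : S * A -> R)
  (d : S * A -> R) (alpha : R) (th0 thstar : 'cV[R]_m) (eps C : R) :
  (* MDP *)
  (forall s a s', 0 <= P s a s') -> (forall s a, \sum_s' P s a s' = 1) ->
  0 < gamma < 1 ->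
  (* features: Phi has full column rank *)
  \rank (Phi phi) = m ->
  (* behaviour policy, initial law of X_0, stationary distribution d > 0 *)
  (forall s a, 0 <= b s a) -> (forall s, \sum_a b s a = 1) ->
  (forall x, 0 <= mu x) -> \sum_x mu x = 1 ->
  (forall x, 0 < d x) -> \sum_x d x = 1 ->
  (forall s' a', \sum_(x : S * A) d x * (P x.1 x.2 s' * b s' a') = d (s', a')) ->
  (* step size *)
  0 < alpha < 1 ->
  let rho := jsr phi P d alpha gamma in
  rho < 1 ->
  (* theta* is the projected Bellman fixed point *)
  gfun phi P r d gamma thstar = 0 ->
  0 < eps ->
  let beta := rho + eps in
  beta < 1 ->
  let p := peps phi P d alpha gamma beta in
  1 <= C ->
  (forall x : 'cV[R]_m,
      norm2 x ^+ 2 <= Vinf phi P d alpha gamma beta x <= C * norm2 x ^+ 2) ->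
  let lam := beta + 4 * alpha * Num.sqrt C * (1 + gamma) * phimax phi ^+ 2 in
  lam < 1 ->
  let K := 2 * alpha * Num.sqrt C * phimax phi *
             (Rmax r + (1 + gamma) * norminf (Phi phi *m thstar)
                     + norminf (Bres phi P r gamma thstar)) in
  let E := Expect phi P r alpha gamma b mu th0 in
  (forall k : nat,
     E k (fun th => p (th - thstar))
       <= lam ^+ k * p (th0 - thstar) + K / (1 - lam) * (1 - lam ^+ k)) /\
  (forall k : nat,
     E k (fun th => norm2 (th - thstar))
       <= Num.sqrt C * lam ^+ k * norm2 (th0 - thstar) + K / (1 - lam)) /\
  (limn_esup (fun k => (E k (fun th => norm2 (th - thstar)))%:E)
       <= (K / (1 - lam))%:E)%E /\
  (forall k : nat,
     E k (fun th => norm2 (Phi phi *m th - Phi phi *m thstar))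
       <= opnorm (Phi phi) *
          (Num.sqrt C * lam ^+ k * norm2 (th0 - thstar) + K / (1 - lam))).
Proof.
move=> P0 P1 /andP[g0 g1] rk b0 b1 mu0 mu1 d0 d1 dstat /andP[a0 a1] rho rho1 gfix eps0.
move=> beta beta1 p C1 HV lam lam1 K E.
rewrite /E; subst p E.
have rho0 : 0 <= rho by exact: jsr_ge0.
have beta0 : 0 < beta by rewrite /beta; apply: ltr_wpDl.
have C0 : 0 <= C by apply: le_trans C1.
have sC0 : 0 <= Num.sqrt C := sqrtr_ge0 C.
have ph0 : 0 <= phimax phi := phimax_ge0 phi.
have g0' : 0 <= gamma := ltW g0.
have W0 : 0 <= 4 * alpha * Num.sqrt C * (1 + gamma) * phimax phi ^+ 2.
  by rewrite !mulr_ge0 ?sqr_ge0 // ?addr_ge0 // ltW.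
have lam0 : 0 <= lam by rewrite /lam addr_ge0 // ltW.
have lam1' : 1 - lam != 0 by rewrite subr_eq0 gt_eqF.
set N := norminf (Phi phi *m thstar).
have N0 : 0 <= N := norminf_ge0 _.
have Rm0 : 0 <= Rmax r := Rmax_ge0 r.
have Bn0 : 0 <= norminf (Bres phi P r gamma thstar) := norminf_ge0 _.
have K0 : 0 <= K by rewrite /K !mulr_ge0 ?addr_ge0 ?mulr_ge0 // ?addr_ge0 // ltW.
have KL0 : 0 <= K / (1 - lam) by rewrite divr_ge0 // subr_ge0 ltW.
have d0' : forall x, 0 <= d x by move=> x; apply: ltW.
pose th w k := theta phi r alpha gamma th0 w k.
pose p := peps phi P d alpha gamma beta.
have step : forall w k, p (th w k.+1 - thstar) <= lam * p (th w k - thstar) + K.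
  move=> w k; rewrite /th thetaS /p.
  set t := theta phi r alpha gamma th0 w k.
  set z := t + _.
  pose pi : {ffun S -> A} := [ffun _ => (w k).2].
  set x := t - thstar.
  have -> : z - thstar = Amat phi P d alpha gamma pi *m x +
                         (z - thstar - Amat phi P d alpha gamma pi *m x).
    by rewrite [RHS]addrC subrK.
  apply: le_trans (peps_tri HV _ _) _.
  have h1 : p (Amat phi P d alpha gamma pi *m x) <= beta * p x by apply: (peps_A HV).
  have h2 := peps_bounds HV (z - thstar - Amat phi P d alpha gamma pi *m x) C0.
  move/andP: h2 => [_ h2].
  have h3 : norm2 (z - thstar - Amat phi P d alpha gamma pi *m x) <=
      alpha * phimax phi * (Rmax r + (1 + gamma) * N)
      + 2 * alpha * (1 + gamma) * phimax phi ^+ 2 * norm2 x.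
    by apply: step_noise.
  have /andP[h4 _] := peps_bounds HV x C0.
  set U := alpha * phimax phi * (Rmax r + (1 + gamma) * N).
  set V := 2 * alpha * (1 + gamma) * phimax phi ^+ 2.
  have V0 : 0 <= V by rewrite /V !mulr_ge0 // ?addr_ge0 // ltW.
  have U0 : 0 <= U by rewrite /U !mulr_ge0 // ?addr_ge0 ?mulr_ge0 // ?addr_ge0 // ltW.
  have h5 : Num.sqrt C * norm2 (z - thstar - Amat phi P d alpha gamma pi *m x)
            <= Num.sqrt C * U + Num.sqrt C * (V * p x).
    rewrite -mulrDr; apply: ler_wpM2l => //; apply: le_trans h3 _.
    by rewrite lerD2l; apply: ler_wpM2l.
  have e1 : lam * p x = beta * p x + 2 * (Num.sqrt C * (V * p x)).
    by rewrite /lam /V; ring.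
  have e2 : K = 2 * (Num.sqrt C * U) + 2 * (alpha * Num.sqrt C * phimax phi * norminf (Bres phi P r gamma thstar)).
    by rewrite /K /U /N; ring.
  have px0 : 0 <= p x by apply: le_trans h4; exact: norm2_ge0.
  have q1 : 0 <= Num.sqrt C * (V * p x) by apply: mulr_ge0 => //; exact: mulr_ge0.
  have q2 : 0 <= Num.sqrt C * U by exact: mulr_ge0.
  have q3 : 0 <= alpha * Num.sqrt C * phimax phi * norminf (Bres phi P r gamma thstar).
    by rewrite !mulr_ge0 // ltW.
  rewrite /p in e1 px0 q1 h5 h1. rewrite e1 e2; lra.
have c1 : forall w k, p (th w k - thstar) <= lam ^+ k * p (th0 - thstar) + K / (1 - lam) * (1 - lam ^+ k).
  move=> w; elim=> [|k IH].
    by rewrite /th /= expr0 mul1r subrr mulr0 addr0.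
  apply: le_trans (step w k) _.
  apply: le_trans (lerD (ler_wpM2l lam0 IH) (lexx K)) _.
  rewrite le_eqVlt; apply/orP; left; apply/eqP; rewrite exprS; field; exact: lam1'.
have p0b := peps_bounds HV (th0 - thstar) C0.
move/andP: p0b => [_ p0b].
have c2 : forall w k, norm2 (th w k - thstar) <=
     Num.sqrt C * lam ^+ k * norm2 (th0 - thstar) + K / (1 - lam).
  move=> w k.
  have /andP[h _] := peps_bounds HV (th w k - thstar) C0.
  apply: le_trans h _; apply: le_trans (c1 w k) _.
  have lk0 : 0 <= lam ^+ k := exprn_ge0 k lam0.
  have lk1 : lam ^+ k <= 1 by apply: exprn_ile1 => //; apply: ltW.
  apply: lerD.
    rewrite mulrAC [X in _ <= X]mulrC /p. by apply: ler_wpM2l.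
  by rewrite ler_piMr // lerBlDr lerDl.
split.
  move=> k; apply: Expect_le => //; exact: c1.
split.
  move=> k; apply: Expect_le => //; exact: c2.
split; last first.
  move=> k; apply: Expect_le => // w.
  rewrite -mulmxBr; apply: le_trans (opnorm_le _ _) _.
  by apply: ler_wpM2l; [exact: opnorm_ge0 | exact: c2].
have c2E : forall k, Expect phi P r alpha gamma b mu th0 k (fun th => norm2 (th - thstar))
   <= Num.sqrt C * lam ^+ k * norm2 (th0 - thstar) + K / (1 - lam).
  move=> k; apply: Expect_le => //; exact: c2.
apply: (@esup_bound _ _ (Num.sqrt C * norm2 (th0 - thstar)) lam).
  by rewrite lam0 lam1.
by move=> k; rewrite mulrAC; exact: c2E.
Qed.
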